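(* Let $n,m\ge 1$, let $\mathcal F=(f_1,\dots,f_m)\colon\mathbb R^n\to\mathbb R^m$, let $C\subset\mathbb R^n$, $Q\subset\mathbb R^m$, and let $\{x^k\}$ be generated by the ABP algorithm described in the context. Assume (A1)–(A7) below: (A1) $\mathcal F$ is continuously differentiable; (A2) $C$ and $Q$ are nonempty, closed and convex, and $z_i^*>-\infty$ for each $i$; (A3) each $f_i$ is convex; (A4) $\Omega\neq\emptyset$; (A5) $\lambda_k>0$ for all $k$, $\sum_k\lambda_k=\infty$, $\sum_k\lambda_k^2<\infty$; (A6) there are constants $0<\underline\alpha\le\bar\alpha$, $0<\underline\beta\le\bar\beta$, $0<\underline\gamma\le\bar\gamma$ with $\underline\alpha\le\alpha_k\le\bar\alpha$, $\underline\beta\le\beta_k\le\bar\beta$, $\underline\gamma\le\gamma_k\le\bar\gamma$ for all $k$; (A7) $\varphi_{\mathrm{lb}}=\varphi^*$. Then the whole sequence $\{x^k\}$ converges to some point $x^\infty\in\Omega$.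
   Context: Let $Q^+:=Q-\mathbb R^m_+=\{y-u: y\in Q,\ u\in\mathbb R^m_+\}$. For a nonempty closed convex set $S$, $P_S$ is the Euclidean metric projection onto $S$ and $\mathrm{dist}(\cdot,S)$ the Euclidean distance. Let $z_i^*:=\inf_{x\in C}f_i(x)$, and fix $r=(r_1,\dots,r_m)$ with all $r_i>0$ and $\sum_i r_i=1$. Define $\varphi(x):=\max_{i}r_i(f_i(x)-z_i^* )$, $H(x):=\tfrac12\mathrm{dist}^2(x,C)$, $G(x):=\tfrac12\mathrm{dist}^2(\mathcal F(x),Q^+)$, $\mathcal S:=\{x\in\mathbb R^n: H(x)=0,\ G(x)=0\}$, $\varphi^*:=\inf_{x\in\mathcal S}\varphi(x)$, $\Omega:=\{x\in\mathcal S:\varphi(x)=\varphi^*\}$, and $\varphi_{\mathrm{lb}}:=\inf_{x\in C}\varphi(x)$. ABP algorithm: given $x^0\in\mathbb R^n$, $\mu>0$ and positive sequences $\{\alpha_k\},\{\beta_k\},\{\gamma_k\},\{\lambda_k\}$, for $k=0,1,2,\dots$ compute $p^k:=P_{Q^+}(\mathcal F(x^k))$, $\rho^k:=\mathcal F(x^k)-p^k$, $z^k:=x^k-P_C(x^k)$, $v^k:=J_{\mathcal F}(x^k)^T\rho^k$ (with $J_{\mathcal F}$ the $m\times n$ Jacobian), $w^k:=r_{i^*}\nabla f_{i^*}(x^k)$ for an arbitrary index $i^*\in\arg\max_i r_i(f_i(x^k)-z_i^* )$, $\Delta_k:=\varphi(x^k)-\varphi_{\mathrm{lb}}$, $d^k:=\alpha_k\mathbf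 1_{\{\Delta_k\ge0\}}w^k+\beta_kz^k+\gamma_kv^k$, $\eta_k:=\max(\mu,\|d^k\|)$, and $x^{k+1}:=x^k-(\lambda_k/\eta_k)d^k$. *)

(* Defs.v *)
From HB Require Import structures.
From mathcomp Require Import all_boot all_order all_algebra.
From mathcomp Require Import all_classical all_reals all_analysis.
Set Implicit Arguments. Unset Strict Implicit. Unset Printing Implicit Defensive.
Import Order.TTheory GRing.Theory Num.Theory.
Import numFieldNormedType.Exports.
Local Open Scope classical_set_scope.
Local Open Scope ring_scope.

Section ABPDefs.
Variable R : realType.

Definition enorm (n : nat) (v : 'rV[R]_n) : R := Num.sqrt (\sum_(j < n) v 0 j ^+ 2).

Definition edist (n : nat) (S : set 'rV[R]_n) (x : 'rV[R]_n) : R :=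
  inf [set enorm (x - y) | y in S].

Definition is_proj (n : nat) (S : set 'rV[R]_n) (x p : 'rV[R]_n) : Prop :=
  S p /\ forall y, S y -> enorm (x - p) <= enorm (x - y).

Definition convex_set (n : nat) (S : set 'rV[R]_n) : Prop :=
  forall x y (t : R), S x -> S y -> 0 <= t <= 1 -> S (t *: x + (1 - t) *: y).

Definition convex_fun (n : nat) (g : 'rV[R]_n -> R) : Prop :=
  forall x y (t : R), 0 <= t <= 1 -> g (t *: x + (1 - t) *: y) <= t * g x + (1 - t) * g y.

Definition grad (n : nat) (g : 'rV[R]_n -> R) (x : 'rV[R]_n) : 'rV[R]_n :=
  \row_(j < n) 'D_(delta_mx 0 j) g x.

Variables (n m : nat) (f : 'I_m -> 'rV[R]_n -> R).

Definition FF (x : 'rV[R]_n) : 'rV[R]_m := \row_(i < m) f i x.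

Definition jacobian (x : 'rV[R]_n) : 'M[R]_(m, n) :=
  \matrix_(i < m, j < n) (grad (f i) x) 0 j.

Definition orthant : set 'rV[R]_m := [set u | forall i, 0 <= u 0 i].

Definition Qplus (Q : set 'rV[R]_m) : set 'rV[R]_m :=
  [set p | exists y u, Q y /\ orthant u /\ p = y - u].

Variables (C : set 'rV[R]_n) (Q : set 'rV[R]_m) (r : 'I_m -> R).

Definition zstar (i : 'I_m) : R := inf [set f i x | x in C].

Definition phi (x : 'rV[R]_n) : R :=
  sup [set r i * (f i x - zstar i) | i in [set: 'I_m]].

Definition HH (x : 'rV[R]_n) : R := (edist C x) ^+ 2 / 2.
Definition GG (x : 'rV[R]_n) : R := (edist (Qplus Q) (FF x)) ^+ 2 / 2.

Definition Sfeas : set 'rV[R]_n := [set x | HH x = 0 /\ GG x = 0].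
Definition phi_star : R := inf [set phi x | x in Sfeas].
Definition Omega : set 'rV[R]_n := [set x | Sfeas x /\ phi x = phi_star].
Definition phi_lb : R := inf [set phi x | x in C].

Definition is_argmax (x : 'rV[R]_n) (i : 'I_m) : Prop :=
  forall j, r j * (f j x - zstar j) <= r i * (f i x - zstar i).

Definition abp_step (mu alpha beta gamma lambda : R) (xk xk1 : 'rV[R]_n) : Prop :=
  exists (pk : 'rV[R]_m) (ck : 'rV[R]_n) (istar : 'I_m),
    is_proj (Qplus Q) (FF xk) pk /\ is_proj C xk ck /\ is_argmax xk istar /\
    let rho := FF xk - pk in
    let z := xk - ck in
    let v := rho *m jacobian xk in            (* = (J_F(x^k)^T rho^k)^T *)
    let w := r istar *: grad (f istar) xk in
    let Delta := phi xk - phi_lb in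
    let d := (if 0 <= Delta then alpha else 0) *: w + beta *: z + gamma *: v in
    let eta := Num.max mu (enorm d) in
    xk1 = xk - (lambda / eta) *: d.

End ABPDefs.

(* Main.v *)
Require Import Defs.
From mathcomp Require Import all_boot all_order all_algebra.
From mathcomp Require Import all_classical all_reals all_analysis.
From mathcomp Require Import ring lra.
Set Implicit Arguments. Unset Strict Implicit. Unset Printing Implicit Defensive.
Import Order.TTheory GRing.Theory Num.Theory.
Import numFieldNormedType.Exports.
Local Open Scope classical_set_scope.
Local Open Scope ring_scope.
Definition dot (R : realType) (n : nat) (u v : 'rV[R]_n) : R :=
  \sum_(j < n) u 0 j * v 0 j.

Lemma dotC (R : realType) n (u v : 'rV[R]_n) : dot u v = dot v u.
Proof. by apply: eq_bigr => j _; rewrite mulrC. Qed.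

Lemma dotDl (R : realType) n (u v w : 'rV[R]_n) : dot (u + v) w = dot u w + dot v w.
Proof. by rewrite /dot -big_split; apply: eq_bigr => j _; rewrite mxE mulrDl. Qed.

Lemma dotNl (R : realType) n (u w : 'rV[R]_n) : dot (- u) w = - dot u w.
Proof. by rewrite /dot -sumrN; apply: eq_bigr => j _; rewrite mxE mulNr. Qed.

Lemma dotZl (R : realType) n (a : R) (u w : 'rV[R]_n) : dot (a *: u) w = a * dot u w.
Proof. by rewrite /dot mulr_sumr; apply: eq_bigr => j _; rewrite mxE mulrA. Qed.

Lemma dotBl (R : realType) n (u v w : 'rV[R]_n) : dot (u - v) w = dot u w - dot v w.
Proof. by rewrite dotDl dotNl. Qed.

Lemma dotDr (R : realType) n (u v w : 'rV[R]_n) : dot w (u + v) = dot w u + dot w v.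
Proof. by rewrite dotC dotDl !(dotC w). Qed.

Lemma dotNr (R : realType) n (u w : 'rV[R]_n) : dot w (- u) = - dot w u.
Proof. by rewrite dotC dotNl dotC. Qed.

Lemma dotBr (R : realType) n (u v w : 'rV[R]_n) : dot w (u - v) = dot w u - dot w v.
Proof. by rewrite dotDr dotNr. Qed.

Lemma dotZr (R : realType) n (a : R) (u w : 'rV[R]_n) : dot w (a *: u) = a * dot w u.
Proof. by rewrite dotC dotZl dotC. Qed.

Lemma dot0l (R : realType) n (w : 'rV[R]_n) : dot 0 w = 0.
Proof. by rewrite /dot big1 // => j _; rewrite mxE mul0r. Qed.

Lemma dotvv_ge0 (R : realType) n (u : 'rV[R]_n) : 0 <= dot u u.
Proof. by apply: sumr_ge0 => j _; rewrite -expr2 sqr_ge0. Qed.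

Lemma enorm_ge0 (R : realType) n (u : 'rV[R]_n) : 0 <= enorm u.
Proof. exact: sqrtr_ge0. Qed.

Lemma enorm_sq (R : realType) n (u : 'rV[R]_n) : enorm u ^+ 2 = dot u u.
Proof.
rewrite /enorm sqr_sqrtr; last by apply: sumr_ge0 => j _; rewrite sqr_ge0.
by apply: eq_bigr => j _; rewrite expr2.
Qed.

Lemma enormE (R : realType) n (u : 'rV[R]_n) : enorm u = Num.sqrt (dot u u).
Proof. by rewrite -enorm_sq sqrtr_sqr ger0_norm // enorm_ge0. Qed.

Lemma dot_eq0 (R : realType) n (u v : 'rV[R]_n) : dot v v = 0 -> dot u v = 0.
Proof.
move=> h; rewrite /dot big1 // => j _.
have H0 : forall i, predT i -> 0 <= v 0 i * v 0 i by move=> i _; rewrite -expr2 sqr_ge0.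
have /eqP := @psumr_eq0P R _ predT (fun j => v 0 j * v 0 j) H0 h j isT.
by rewrite mulf_eq0 orbb => /eqP ->; rewrite mulr0.
Qed.

Lemma CS_sq (R : realType) n (u v : 'rV[R]_n) : dot u v ^+ 2 <= dot u u * dot v v.
Proof.
have [h|h] := eqVneq (dot v v) 0.
  by rewrite dot_eq0 // h expr0n /= mulr0.
have vp : 0 < dot v v by rewrite lt_neqAle eq_sym h dotvv_ge0.
set t := dot u v / dot v v.
have := dotvv_ge0 (u - t *: v).
rewrite !(dotBl, dotBr, dotZl, dotZr) (dotC v u).
rewrite /t => H.
have : 0 <= dot u u * dot v v - dot u v ^+ 2.
  have -> : dot u u * dot v v - dot u v ^+ 2 =
    (dot u u - dot u v / dot v v * dot u v -
    dot u v / dot v v * (dot u v - dot u v / dot v v * dot v v)) * dot v v.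
    move: (dot u u) (dot u v) (dot v v) h => a b c hc.
    by field.
  by rewrite mulr_ge0 // ltW.
by rewrite subr_ge0.
Qed.

Lemma CS (R : realType) n (u v : 'rV[R]_n) : dot u v <= enorm u * enorm v.
Proof.
apply: le_trans (ler_norm _) _.
rewrite !enormE -sqrtrM ?dotvv_ge0 // -(sqrtr_sqr (dot u v)).
by rewrite ler_sqrt ?CS_sq // mulr_ge0 // dotvv_ge0.
Qed.

Lemma le_sq (R : realType) (a b : R) : 0 <= a -> 0 <= b -> a ^+ 2 <= b ^+ 2 -> a <= b.
Proof. by move=> ha hb h; rewrite -(@ler_pXn2r _ 2) ?nnegrE. Qed.

Lemma enorm_triangle (R : realType) n (u v : 'rV[R]_n) :
  enorm (u + v) <= enorm u + enorm v.
Proof.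
apply: le_sq; rewrite ?addr_ge0 ?enorm_ge0 //.
rewrite enorm_sq sqrrD !enorm_sq dotDl !dotDr (dotC v u).
have := CS u v; lra.
Qed.

Lemma enormN (R : realType) n (u : 'rV[R]_n) : enorm (- u) = enorm u.
Proof. by rewrite !enormE dotNl dotNr opprK. Qed.

Lemma enormB (R : realType) n (u v : 'rV[R]_n) : enorm (u - v) = enorm (v - u).
Proof. by rewrite -enormN opprB. Qed.

Lemma enormZ (R : realType) n (a : R) (u : 'rV[R]_n) : enorm (a *: u) = `|a| * enorm u.
Proof. by rewrite !enormE dotZl dotZr mulrA -expr2 sqrtrM ?sqr_ge0 // sqrtr_sqr. Qed.

Lemma coord_le_enorm (R : realType) n (u : 'rV[R]_n) j : `|u 0 j| <= enorm u.
Proof.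
apply: le_sq; rewrite ?enorm_ge0 //.
rewrite real_normK ?num_real // enorm_sq /dot (bigD1 j) //= -expr2 lerDl.
by apply: sumr_ge0 => i _; rewrite -expr2 sqr_ge0.
Qed.

Lemma enorm_le_l1 (R : realType) n (u : 'rV[R]_n) : enorm u <= \sum_j `|u 0 j|.
Proof.
apply: le_sq; rewrite ?enorm_ge0 ?sumr_ge0 // enorm_sq /dot.
suff [] : \sum_(j < n) u 0 j * u 0 j <= (\sum_j `|u 0 j|) ^+ 2 /\ 0 <= \sum_j `|u 0 j| by [].
elim/big_rec2: _ => [|j a b _ [IH b0]]; first by rewrite expr0n.
split; last by rewrite addr_ge0.
have e : u 0 j * u 0 j = `|u 0 j| ^+ 2 by rewrite real_normK ?num_real // expr2.
rewrite e sqrrD; have := normr_ge0 (u 0 j); nra.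
Qed.

Lemma sq_le (R : realType) (a b : R) : 0 <= a -> a <= b -> a ^+ 2 <= b ^+ 2.
Proof. move=> ha hab; rewrite (@ler_pXn2r _ 2) ?nnegrE //; exact: le_trans hab. Qed.

Lemma le0_eps (R : realType) (a K : R) : 0 <= K ->
  (forall e, 0 < e -> a <= K * e) -> a <= 0.
Proof.
move=> K0 H; rewrite leNgt; apply/negP => a0.
have e0 : 0 < a / (K + 1) by rewrite divr_gt0 // ltr_wpDl.
have := H _ e0.
have -> : K * (a / (K + 1)) = a - a / (K + 1) by field; rewrite gt_eqF // ltr_wpDl.
by move=> h; move: e0; rewrite ltNge; apply/negP/negPn; lra.
Qed.

Lemma dot_delta (R : realType) n (w : 'rV[R]_n) i : dot w (delta_mx 0 i) = w 0 i.
Proof.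
rewrite /dot (bigD1 i) //= mxE !eqxx mulr1 big1 ?addr0 // => j ji.
by rewrite mxE (negbTE ji) andbF mulr0.
Qed.

Lemma edist_le (R : realType) n (S : set 'rV[R]_n) x y : S y -> Defs.edist S x <= enorm (x - y).
Proof.
move=> Sy; apply: ge_inf; last by exists y.
by exists 0 => _ [z _ <-]; exact: enorm_ge0.
Qed.

Lemma edist_ge0 (R : realType) n (S : set 'rV[R]_n) x : S !=set0 -> 0 <= Defs.edist S x.
Proof.
move=> [y Sy]; apply: lb_le_inf; first by exists (enorm (x - y)), y.
by move=> _ [z _ <-]; exact: enorm_ge0.
Qed.

Lemma edist_approx (R : realType) n (S : set 'rV[R]_n) x e : S !=set0 -> 0 < e ->
  exists2 y, S y & enorm (x - y) < Defs.edist S x + e.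
Proof.
move=> [y0 Sy0] e0.
have ne : [set enorm (x - y) | y in S] !=set0 by exists (enorm (x - y0)), y0.
have lt0 : Defs.edist S x < Defs.edist S x + e by rewrite ltrDl.
have [_ [y Sy <-] lt] := @inf_lt R [set enorm (x - y) | y in S] (Defs.edist S x + e) ne lt0.
by exists y.
Qed.

Lemma proj_edist (R : realType) n (S : set 'rV[R]_n) x p : is_proj S x p ->
  Defs.edist S x = enorm (x - p).
Proof.
move=> [Sp H]; apply/eqP; rewrite eq_le edist_le //=.
apply: lb_le_inf; first by exists (enorm (x - p)), p.
by move=> _ [z Sz <-]; exact: H.
Qed.

Lemma proj_VI (R : realType) n (S : set 'rV[R]_n) x p y :
  is_proj S x p -> Defs.convex_set S -> S y -> dot (x - p) (y - p) <= 0.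
Proof.
move=> [Sp H] cS Sy.
have key : forall t, 0 <= t <= 1 -> enorm (x - p) ^+ 2 <= enorm ((x - p) - t *: (y - p)) ^+ 2.
  move=> t t01; have := H _ (cS y p t Sy Sp t01).
  have -> : x - (t *: y + (1 - t) *: p) = (x - p) - t *: (y - p).
    by apply/rowP => j; rewrite !mxE; ring.
  exact: sq_le (enorm_ge0 _).
move: key; move: (x - p) (y - p) => X Y key.
rewrite leNgt; apply/negP => a0.
have b0 : 0 <= dot Y Y := dotvv_ge0 _.
move: (key (dot X Y / (dot X Y + dot Y Y))).
rewrite !enorm_sq dotBl !dotBr !dotZl !dotZr (dotC Y X).
move: (dot X Y) (dot Y Y) (dot X X) a0 b0 => a b c a0 b0.
have ab0 : 0 < a + b by rewrite ltr_pwDl.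
have -> : c - a / (a + b) * a - (a / (a + b) * a - a / (a + b) * (a / (a + b) * b)) =
   c - a * a * (2 * a + b) / ((a + b) * (a + b)).
  by field; rewrite gt_eqF.
have t0 : 0 <= a / (a + b) <= 1.
  by apply/andP; split; [rewrite divr_ge0 ?ltW | rewrite ler_pdivrMr // mul1r lerDl].
move=> /(_ t0) h.
have : 0 < a * a * (2 * a + b) / ((a + b) * (a + b)).
  by rewrite divr_gt0 ?mulr_gt0 // ltr_pwDl // mulr_gt0.
lra.
Qed.

Lemma proj_VI_approx (R : realType) n (S : set 'rV[R]_n) x p z :
  is_proj S x p -> Defs.convex_set S ->
  (forall e, 0 < e -> exists2 y, S y & enorm (z - y) < e) ->
  dot (x - p) (z - p) <= 0.
Proof.
move=> Pp cS H; apply: (@le0_eps _ _ (enorm (x - p))); first exact: enorm_ge0.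
move=> e e0; have [y Sy lt] := H e e0.
have -> : z - p = (y - p) + (z - y) by apply/rowP => j; rewrite !mxE; ring.
rewrite dotDr; have := proj_VI Pp cS Sy; have := CS (x - p) (z - y).
have := enorm_ge0 (x - p).
have := ler_wpM2l (enorm_ge0 (x - p)) (ltW lt). lra.
Qed.

Lemma edist0_approx (R : realType) n (S : set 'rV[R]_n) z : S !=set0 -> Defs.edist S z = 0 ->
  forall e, 0 < e -> exists2 y, S y & enorm (z - y) < e.
Proof.
move=> S0 h e e0; have [y Sy lt] := edist_approx z S0 e0.
by exists y => //; rewrite h add0r in lt.
Qed.

Lemma Qplus_convex (R : realType) m (Q : set 'rV[R]_m) : Defs.convex_set Q -> Defs.convex_set (Qplus Q).
Proof.
move=> cQ p1 p2 t [y1 [u1 [Qy1 [Ou1 ->]]]] [y2 [u2 [Qy2 [Ou2 ->]]]] t01.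
exists (t *: y1 + (1 - t) *: y2), (t *: u1 + (1 - t) *: u2); split; first exact: cQ.
split; last by apply/rowP => j; rewrite !mxE; ring.
move=> i; rewrite !mxE; case/andP: t01 => t0 t1.
by rewrite addr_ge0 // mulr_ge0 // ?Ou1 ?Ou2 // subr_ge0.
Qed.

Lemma Qplus_down (R : realType) m (Q : set 'rV[R]_m) p i :
  Qplus Q p -> Qplus Q (p - delta_mx 0 i).
Proof.
move=> [y [u [Qy [Ou ->]]]]; exists y, (u + delta_mx 0 i); split => //; split.
  by move=> j; rewrite !mxE addr_ge0 // Ou.
by rewrite opprD addrA.
Qed.

Lemma rho_ge0 (R : realType) m (Q : set 'rV[R]_m) y p i :
  Defs.convex_set Q -> is_proj (Qplus Q) y p -> 0 <= (y - p) 0 i.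
Proof.
move=> cQ Pp; have := proj_VI Pp (Qplus_convex cQ) (Qplus_down i Pp.1).
have -> : p - delta_mx 0 i - p = - delta_mx 0 i by rewrite addrAC subrr add0r.
by rewrite dotNr dot_delta oppr_le0.
Qed.

Lemma conv_bridge (R : realType) n (S : set 'rV[R]_n) : convex_set S -> Defs.convex_set S.
Proof.
move=> cS x y t Sx Sy /andP[t0 t1].
have := cS x y (Itv01 t0 t1) (mem_set Sx) (mem_set Sy).
by move/set_mem; congr S.
Qed.

Lemma grad_dot (R : realType) n (g : 'rV[R]_n -> R) x h :
  differentiable g x -> 'D_h g x = dot (grad g x) h.
Proof.
move=> dg; rewrite deriveE //.
have hE : h = \sum_j h 0 j *: delta_mx 0 j by rewrite {1}(matrix_sum_delta h) big_ord1.
rewrite [in LHS]hE linear_sum /dot; apply: eq_bigr => j _.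
rewrite linearZ /= -deriveE // mxE mulrC; done.
Qed.

Lemma grad_ineq (R : realType) n (g : 'rV[R]_n -> R) x y :
  differentiable g x -> convex_fun g -> dot (grad g x) (y - x) <= g y - g x.
Proof.
move=> dg cg; rewrite -grad_dot //.
have D : derivable g x (y - x) by exact: diff_derivable.
have sub : ((0:R)^'+) `=>` ((0:R)^').
  move=> A; rewrite /at_right /dnbhs /within /=; apply: filterS => u Hu u0; apply: Hu; by rewrite gt_eqF.
have D' := cvg_trans (cvg_app _ sub) D.
apply: (cvgr_to_le D').
near=> h.
have h0 : 0 < h by near: h; exact: nbhs_right_gt.
have h1 : h <= 1 by near: h; exact: nbhs_right_le.
rewrite /= /shift.
have -> : h *: (y - x) + x = h *: y + (1 - h) *: x by apply/rowP => j; rewrite !mxE; ring.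
have := cg y x h; rewrite h1 ltW //= => /(_ isT) H.
change (h^-1 * (g (h *: y + (1 - h) *: x) - g x) <= g y - g x).
rewrite mulrC ler_pdivrMr //; lra.
Unshelve. all: by end_near.
Qed.

Lemma fejer_sum (R : realType) (a e c : nat -> R) :
  (forall k, a k.+1 <= a k + e k - c k) ->
  forall N d, a (N + d)%N <= a N + \sum_(N <= k < N + d) (e k - c k).
Proof.
move=> H N; elim=> [|d IH]; first by rewrite addn0 big_geq // addr0.
rewrite addnS big_nat_recr ?leq_addr //=.
have := H (N + d)%N; lra.
Qed.

Lemma series_nd (R : realType) (e : nat -> R) : (forall k, 0 <= e k) ->
  {homo series e : n m / (n <= m)%N >-> n <= m}.
Proof.
move=> e0; apply/nondecreasing_seqP => k.
by rewrite /series /= big_nat_recr //= lerDl.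
Qed.

Lemma series_tail (R : realType) (e : nat -> R) : (forall k, 0 <= e k) ->
  cvgn (series e) -> forall N K, (N <= K)%N ->
  \sum_(N <= k < K) e k <= limn (series e) - series e N.
Proof.
move=> e0 ce N K NK.
have := nondecreasing_cvgn_le (series_nd e0) ce K.
rewrite /series /= (@big_cat_nat _ _ _ N 0 K) //=; lra.
Qed.

Lemma series_small (R : realType) (e : nat -> R) : 
  cvgn (series e) -> forall eps, 0 < eps -> exists N, limn (series e) - series e N < eps.
Proof.
move=> ce eps eps0.
have /cvgrPdist_lt /(_ eps eps0) := ce.
move=> /filter_ex [N HN]; exists N.
by apply: le_lt_trans HN; apply: ler_norm.
Qed.

Lemma eventually_small (R : realType) (a e : nat -> R) :
  (forall k, a k.+1 <= a k + e k) -> (forall k, 0 <= e k) -> cvgn (series e) ->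
  (forall eps, 0 < eps -> forall N, exists2 k, (N <= k)%N & a k < eps) ->
  forall eps, 0 < eps -> exists N, forall K, (N <= K)%N -> a K <= eps.
Proof.
move=> H e0 ce fr eps eps0.
have eps2 : 0 < eps / 2 by rewrite divr_gt0.
have [N0 HN0] := series_small ce eps2.
have [k Nk ak] := fr _ eps2 N0.
exists k => K kK.
have H' : forall k, a k.+1 <= a k + e k - 0 by move=> j; rewrite subr0.
have := fejer_sum H' k (K - k).
rewrite subnKC //.
have -> : \sum_(k <= k0 < K) (e k0 - 0) = \sum_(k <= k0 < K) e k0.
  by apply: eq_bigr => j _; rewrite subr0.
have := series_tail e0 ce kK.
have := series_nd e0 Nk.
lra.
Qed.

Lemma frequently_small (R : realType) (a e s th lam : nat -> R) (M : R) :
  (forall k, a k.+1 <= a k + e k - s k * th k) -> (forall k, 0 <= e k) ->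
  cvgn (series e) -> (forall k, 0 <= a k) -> (forall k, 0 <= th k) ->
  0 < M -> (forall k, lam k / M <= s k) -> (forall k, 0 < lam k) ->
  series lam @ \oo --> +oo ->
  forall eps, 0 < eps -> forall N, exists2 k, (N <= k)%N & th k < eps.
Proof.
move=> H e0 ce a0 th0 M0 sM lam0 lamoo eps eps0 N.
have [//|Hc] := pselect (exists2 k, (N <= k)%N & th k < eps).
have Hge : forall k, (N <= k)%N -> eps <= th k.
  by move=> k Nk; rewrite leNgt; apply/negP => lt; apply: Hc; exists k.
set B := M / eps * (a N + (limn (series e) - series e N)).
have Hb : forall d, \sum_(N <= k < N + d) lam k <= B.
  move=> d; have := fejer_sum H N d.
  rewrite sumrB.
  have h1 := series_tail e0 ce (leq_addr d N).
  have h2 : \sum_(N <= k < N + d) lam k * (eps / M) <= \sum_(N <= k < N + d) s k * th k.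
    rewrite big_nat_cond [X in _ <= X]big_nat_cond; apply: ler_sum => k /andP[/andP[Nk _] _].
    have hs := sM k; have ht := Hge k Nk.
    have hl : 0 <= lam k / M by rewrite divr_ge0 ?ltW.
    have -> : lam k * (eps / M) = (lam k / M) * eps by rewrite mulrA mulrAC.
    apply: le_trans (ler_wpM2l hl ht) _.
    have th0' : 0 <= th k by exact: le_trans (ltW eps0) ht.
    nra.
  rewrite -mulr_suml in h2.
  have := a0 (N + d)%N.
  move=> h3 h4.
  have h5 : (\sum_(N <= i < N + d) lam i) * (eps / M) <= a N + (limn (series e) - series e N) by lra.
  by move: h5; rewrite -ler_pdivlMr ?divr_gt0 // invf_div mulrC.
have /cvgryPgtr /(_ (series lam N + B)) := lamoo.
move=> /(_ (num_real _)) HK.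
have := filter_ex (filterI HK (nbhs_infty_ge N)).
move=> [K [HK1 NK]].
have := Hb (K - N)%N; rewrite subnKC //.
move: HK1; rewrite /series /= (@big_cat_nat _ _ _ N 0 K) //=; lra.
Qed.

Definition term (R : realType) n m (f : 'I_m -> 'rV[R]_n -> R) (C : set 'rV[R]_n)
  (r : 'I_m -> R) x i := r i * (f i x - zstar f C i).

Lemma phi_ge (R : realType) n m (f : 'I_m -> 'rV[R]_n -> R) C r x j :
  term f C r x j <= phi f C r x.
Proof.
rewrite /phi; apply: ub_le_sup; last by exists j.
exists (\sum_i `|term f C r x i|) => _ [i _ <-].
apply: le_trans (ler_norm _) _.
rewrite (bigD1 i) //= lerDl; exact: sumr_ge0.
Qed.

Lemma phi_le (R : realType) n m (f : 'I_m -> 'rV[R]_n -> R) C r x B (j0 : 'I_m) :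
  (forall i, term f C r x i <= B) -> phi f C r x <= B.
Proof.
move=> H; rewrite /phi; apply: ge_sup; first by exists (term f C r x j0), j0.
by move=> _ [i _ <-]; exact: H.
Qed.

Lemma phi_argmax (R : realType) n m (f : 'I_m -> 'rV[R]_n -> R) C r x i :
  is_argmax f C r x i -> phi f C r x = term f C r x i.
Proof.
move=> H; apply/eqP; rewrite eq_le phi_ge andbT.
by apply: (phi_le i) => j; exact: H.
Qed.

Lemma zstar_le (R : realType) n m (f : 'I_m -> 'rV[R]_n -> R) (C : set 'rV[R]_n) i y :
  (exists M : R, forall y, C y -> M <= f i y) -> C y -> zstar f C i <= f i y.
Proof.
move=> [M HM] Cy; apply: ge_inf; last by exists y.
by exists M => _ [z Cz <-]; exact: HM.
Qed.

Lemma term_ge0_C (R : realType) n m (f : 'I_m -> 'rV[R]_n -> R) (C : set 'rV[R]_n) r i y :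
  0 < r i -> (exists M : R, forall y, C y -> M <= f i y) -> C y -> 0 <= term f C r y i.
Proof.
move=> r0 hb Cy; rewrite /term; apply: mulr_ge0; [exact: ltW | rewrite subr_ge0; exact: zstar_le].
Qed.

Lemma dot_jac (R : realType) n m (f : 'I_m -> 'rV[R]_n -> R) x (rho : 'rV[R]_m) h :
  dot (rho *m Defs.jacobian f x) h = \sum_i rho 0 i * dot (grad (f i) x) h.
Proof.
rewrite /dot; under eq_bigr do rewrite mxE mulr_suml.
rewrite exchange_big /=; apply: eq_bigr => i _.
rewrite mulr_sumr; apply: eq_bigr => j _; rewrite mxE; ring.
Qed.

Lemma coord_le_mx (R : realType) n (u : 'rV[R]_n) j : `|u 0 j| <= `|u|.
Proof.
rewrite [X in _ <= X]/Num.norm /= mx_normrE.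
by apply: (le_trans _ (le_bigmax _ _ (0, j))).
Qed.

Lemma mx_le_enorm (R : realType) n (u : 'rV[R]_n) : `|u| <= enorm u.
Proof.
rewrite [X in X <= _]/Num.norm /= mx_normrE.
apply: bigmax_le; first exact: enorm_ge0.
by move=> [i j] _; rewrite /= (ord1 i); exact: coord_le_enorm.
Qed.

Lemma enorm_le_mx (R : realType) n (u : 'rV[R]_n) : enorm u <= n%:R * `|u|.
Proof.
apply: le_trans (enorm_le_l1 u) _.
apply: le_trans (ler_sum _ (fun j _ => coord_le_mx u j)) _.
by rewrite sumr_const card_ord mulr_natl.
Qed.

Lemma enorm_le_coord (R : realType) n (u : 'rV[R]_n) B :
  (forall j, `|u 0 j| <= B) -> enorm u <= n%:R * B.
Proof.
move=> H; apply: le_trans (enorm_le_l1 u) _.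
apply: le_trans (ler_sum _ (fun j _ => H j)) _.
by rewrite sumr_const card_ord mulr_natl.
Qed.

Lemma HH0 (R : realType) n (C : set 'rV[R]_n) x : HH C x = 0 -> Defs.edist C x = 0.
Proof. by move/eqP; rewrite mulf_eq0 invr_eq0 pnatr_eq0 orbF expf_eq0 /= => /eqP. Qed.

Lemma GG0 (R : realType) n m (f : 'I_m -> 'rV[R]_n -> R) Q x :
  GG f Q x = 0 -> Defs.edist (Qplus Q) (FF f x) = 0.
Proof. by move/eqP; rewrite mulf_eq0 invr_eq0 pnatr_eq0 orbF expf_eq0 /= => /eqP. Qed.

Lemma Qplus0 (R : realType) m (Q : set 'rV[R]_m) : Q !=set0 -> Qplus Q !=set0.
Proof. by move=> [q Qq]; exists q, q, 0; split => //; split; [move=> i; rewrite mxE | rewrite subr0]. Qed.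

Lemma dot_z_ge (R : realType) n (C : set 'rV[R]_n) xk ck xs :
  Defs.convex_set C -> C !=set0 -> is_proj C xk ck -> Defs.edist C xs = 0 ->
  enorm (xk - ck) ^+ 2 <= dot (xk - ck) (xk - xs).
Proof.
move=> cC C0 Pc e0.
have := proj_VI_approx Pc cC (edist0_approx C0 e0).
have -> : xk - xs = (xk - ck) - (xs - ck) by apply/rowP => j; rewrite !mxE; ring.
rewrite dotBr enorm_sq; lra.
Qed.

Lemma dot_v_ge (R : realType) n m (f : 'I_m -> 'rV[R]_n -> R) (Q : set 'rV[R]_m) xk pk xs :
  (forall i y, differentiable (f i) y) -> (forall i, convex_fun (f i)) ->
  Defs.convex_set Q -> Q !=set0 -> is_proj (Qplus Q) (FF f xk) pk ->
  Defs.edist (Qplus Q) (FF f xs) = 0 ->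
  enorm (FF f xk - pk) ^+ 2 <= dot ((FF f xk - pk) *m Defs.jacobian f xk) (xk - xs).
Proof.
move=> fd fc cQ Q0 Pp e0.
have VI := proj_VI_approx Pp (Qplus_convex cQ) (edist0_approx (Qplus0 Q0) e0).
rewrite dot_jac.
have step : forall i, (FF f xk - pk) 0 i * (f i xk - f i xs) <=
   (FF f xk - pk) 0 i * dot (grad (f i) xk) (xk - xs).
  move=> i; apply: ler_wpM2l; first exact: rho_ge0 Pp.
  have := grad_ineq xs (fd i xk) (fc i).
  have -> : xk - xs = - (xs - xk) by rewrite opprB.
  rewrite dotNr; lra.
apply: le_trans (ler_sum _ (fun i _ => step i)).
have -> : \sum_i (FF f xk - pk) 0 i * (f i xk - f i xs) = dot (FF f xk - pk) (FF f xk - FF f xs).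
  by rewrite /dot; apply: eq_bigr => i _; rewrite [in RHS]mxE /FF !mxE.
have -> : FF f xk - FF f xs = (FF f xk - pk) - (FF f xs - pk) by apply/rowP => j; rewrite !mxE; ring.
rewrite dotBr enorm_sq; lra.
Qed.

Lemma dot_w_ge (R : realType) n m (f : 'I_m -> 'rV[R]_n -> R) (C : set 'rV[R]_n) r xk (i : 'I_m) xs :
  (forall i, 0 < r i) -> (forall i y, differentiable (f i) y) -> (forall i, convex_fun (f i)) ->
  is_argmax f C r xk i ->
  phi f C r xk - phi f C r xs <= dot (r i *: grad (f i) xk) (xk - xs).
Proof.
move=> rp fd fc am.
rewrite (phi_argmax am) dotZl.
have := phi_ge f C r xs i; rewrite /term.
have := grad_ineq xs (fd i xk) (fc i).
have -> : xk - xs = - (xs - xk) by rewrite opprB.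
rewrite dotNr => h1 h2.
have h3 : r i * (f i xk - f i xs) <= r i * - dot (grad (f i) xk) (xs - xk).
  by apply: ler_wpM2l; [exact: ltW | lra].
lra.
Qed.

Lemma inv_small (R : realType) (eps : R) : 0 < eps ->
  exists N : nat, forall j, (N <= j)%N -> (j.+1%:R)^-1 < eps.
Proof.
move=> e0; exists (Num.truncn eps^-1) => j Nj.
have h1 := truncnS_gt (eps^-1).
have h2 : (Num.truncn eps^-1).+1%:R <= j.+1%:R :> R by rewrite ler_nat ltnS.
rewrite invf_plt ?posrE //; exact: lt_le_trans h1 h2.
Qed.

Lemma bounded_cont (R : realType) n (V : normedModType R) (g : 'rV[R]_n -> V) (Rb : R) :
  continuous g -> exists M, forall y, `|y| <= Rb -> `|g y| <= M.
Proof.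
move=> gc.
set Box := [set v : 'rV[R]_n | forall i, `[- Rb, Rb]%classic (v ord0 i)].
have cB : compact Box.
  by apply: (@rV_compact _ _ (fun=> `[- Rb, Rb]%classic)) => _; exact: segment_compact.
have gcA : {within Box, continuous g} by apply: continuous_subspaceT.
have /compact_bounded [M [_ HM]] := continuous_compact gcA cB.
exists (M + 1) => y hy; apply: HM; first by rewrite ltrDl.
exists y => //= i; rewrite /= in_itv /= -ler_norml.
exact: le_trans (coord_le_mx y i) hy.
Qed.

Lemma unif_bound (R : realType) m (P : 'I_m -> R -> Prop) :
  (forall i M M', M <= M' -> P i M -> P i M') ->
  (forall i, exists M, P i M) -> exists M, 0 <= M /\ forall i, P i M.
Proof.
move=> mono H; have [g Hg] := choice H.
exists (\sum_i `|g i|); split; first exact: sumr_ge0.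
move=> i; apply: mono (Hg i); apply: le_trans (ler_norm _) _.
by rewrite (bigD1 i) //= lerDl; exact: sumr_ge0.
Qed.

Lemma cluster_sub (R : realType) n (x : nat -> 'rV[R]_n) (th : nat -> R) (Rb : R) :
  (forall k, `|x k| <= Rb) ->
  (forall eps, 0 < eps -> forall N, exists2 k, (N <= k)%N & th k < eps) ->
  exists xb, forall eps, 0 < eps -> forall N,
    exists k, [/\ (N <= k)%N, th k < eps & `|xb - x k| < eps].
Proof.
move=> xb0 fr.
have H : forall j, exists k, (j <= k)%N /\ th k < (j.+1%:R)^-1.
  move=> j; have jp : 0 < (j.+1%:R : R)^-1 by rewrite invr_gt0 ltr0Sn.
  by have [k jk hk] := fr _ jp j; exists k.
have [kk Hk] := choice H.
pose y := fun j => x (kk j).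
set Box := [set v : 'rV[R]_n | forall i, `[- Rb, Rb]%classic (v ord0 i)].
have cB : compact Box.
  by apply: (@rV_compact _ _ (fun=> `[- Rb, Rb]%classic)) => _; exact: segment_compact.
have yB : forall j, Box (y j).
  move=> j i; rewrite /= in_itv /= -ler_norml.
  exact: le_trans (coord_le_mx (y j) i) (xb0 _).
have FB : (y @ \oo) Box by apply: filterS (nbhs_infty_ge 0) => j _; exact: yB.
have [xb [_ cl]] := cB (y @ \oo) _ FB.
exists xb => eps e0 N.
have [N1 HN1] := inv_small e0.
set B := [set z | `|xb - z| < eps].
have nB : nbhs xb B by apply/nbhs_ballP; exists eps => // z; rewrite -ball_normE.
set A := [set z | exists j, (maxn N N1 <= j)%N /\ z = y j].
have FA : (y @ \oo) A by apply: filterS (nbhs_infty_ge (maxn N N1)) => j hj; exists j.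
have [z [[j [hj ->]] hz]] := cl A B FA nB.
exists (kk j); split => //.
  exact: leq_trans (leq_maxl N N1) (leq_trans hj (Hk j).1).
apply: lt_trans (Hk j).2 _; apply: HN1.
exact: leq_trans (leq_maxr N N1) hj.
Qed.

Lemma bounded_fejer (R : realType) (a e c : nat -> R) :
  (forall k, a k.+1 <= a k + e k - c k) -> (forall k, 0 <= c k) -> (forall k, 0 <= e k) ->
  cvgn (series e) -> forall K, a K <= a 0%N + limn (series e).
Proof.
move=> H c0 e0 ce K.
have := fejer_sum H 0 K; rewrite add0n sumrB.
have := series_tail e0 ce (leq0n K).
have -> : series e 0 = 0 by rewrite /series /= big_geq.
have : 0 <= \sum_(0 <= k < K) c k by apply: sumr_ge0.
lra.
Qed.

Lemma d_bound (R : realType) n m (f : 'I_m -> 'rV[R]_n -> R) (C : set 'rV[R]_n) (Q : set 'rV[R]_m)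
  (r : 'I_m -> R) xk pk ck (i : 'I_m) (ca b g ahi bhi ghi Mg Mf E : R) c0 q0 :
  C c0 -> Qplus Q q0 -> is_proj (Qplus Q) (FF f xk) pk -> is_proj C xk ck ->
  0 <= r i <= 1 -> enorm xk <= E -> 0 <= Mg -> 
  (forall i j, `|grad (f i) xk 0 j| <= Mg) -> (forall i, `|f i xk| <= Mf) ->
  `|ca| <= ahi -> 0 <= b <= bhi -> 0 <= g <= ghi ->
  enorm (ca *: (r i *: grad (f i) xk) + b *: (xk - ck) + g *: ((FF f xk - pk) *m Defs.jacobian f xk))
  <= ahi * (n%:R * Mg) + bhi * (E + enorm c0)
     + ghi * (n%:R * (m%:R * ((m%:R * Mf + enorm q0) * Mg))).
Proof.
move=> Cc0 Qq0 Pp Pc /andP[ri0 ri1] xE Mg0 gB fB ca_le /andP[b0 b1] /andP[g0 g1].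
have hw : enorm (r i *: grad (f i) xk) <= n%:R * Mg.
  rewrite enormZ ger0_norm //.
  have := enorm_le_coord (gB i); have := enorm_ge0 (grad (f i) xk).
  have : 0 <= n%:R * Mg :> R by rewrite mulr_ge0.
  nra.
have hz : enorm (xk - ck) <= E + enorm c0.
  apply: le_trans (Pc.2 c0 Cc0) _.
  apply: le_trans (enorm_triangle _ _) _; rewrite enormN; lra.
have hrho : enorm (FF f xk - pk) <= m%:R * Mf + enorm q0.
  apply: le_trans (Pp.2 q0 Qq0) _.
  apply: le_trans (enorm_triangle _ _) _; rewrite enormN lerD2r.
  by apply: enorm_le_coord => j; rewrite mxE.
have hv : enorm ((FF f xk - pk) *m Defs.jacobian f xk) <= n%:R * (m%:R * ((m%:R * Mf + enorm q0) * Mg)).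
  apply: enorm_le_coord => j; rewrite mxE.
  apply: le_trans (ler_norm_sum _ _ _) _.
  set X := (m%:R * Mf + enorm q0) * Mg.
  have -> : m%:R * X = \sum_(i0 < m) X by rewrite sumr_const card_ord mulr_natl.
  apply: ler_sum => i' _; rewrite normrM mxE.
  apply: ler_pM; rewrite ?normr_ge0 //.
    have := coord_le_enorm (FF f xk - pk) i'; rewrite [X in `|X| <= _ -> _]mxE => h.
    exact: le_trans h hrho.
  by rewrite mxE; exact: gB.
apply: le_trans (enorm_triangle _ _) _.
apply: lerD; last first.
  rewrite enormZ ger0_norm //; apply: ler_pM => //; exact: enorm_ge0.
apply: le_trans (enorm_triangle _ _) _.
apply: lerD.
  rewrite enormZ; apply: ler_pM => //; exact: enorm_ge0.
rewrite enormZ ger0_norm //; apply: ler_pM => //; exact: enorm_ge0.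
Qed.

Lemma lt_sq (R : realType) (a b : R) : 0 <= a -> 0 <= b -> a ^+ 2 < b ^+ 2 -> a < b.
Proof. by move=> ha hb h; rewrite -(@ltr_pXn2r _ 2) ?nnegrE. Qed.

Unset Implicit Arguments.

Theorem theorem1 (R : realType) (n m : nat)
  (f : 'I_m -> 'rV[R]_n -> R) (C : set 'rV[R]_n) (Q : set 'rV[R]_m)
  (r : 'I_m -> R) (mu : R) (alpha beta gamma lambda : nat -> R)
  (x : nat -> 'rV[R]_n)
  (alo ahi blo bhi glo ghi : R) :
  (0 < n)%N -> (0 < m)%N ->
  (* weights r: r_i > 0, sum r_i = 1 *)
  (forall i, 0 < r i) -> \sum_(i < m) r i = 1 ->
  (* (A1) F continuously differentiable *)
  (forall i (y : 'rV[R]_n), differentiable (f i) y) ->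
  (forall i, continuous (grad (f i))) ->
  (* (A2) *)
  C !=set0 -> closed C -> convex_set C ->
  Q !=set0 -> closed Q -> convex_set Q ->
  (forall i, exists M : R, forall y, C y -> M <= f i y) ->
  (* (A3) *)
  (forall i, convex_fun (f i)) ->
  (* (A4) *)
  Omega f C Q r !=set0 ->
  (* (A5) *)
  (forall k, 0 < lambda k) ->
  series lambda @ \oo --> +oo ->
  cvgn (series (fun k => lambda k ^+ 2)) ->
  (* (A6) *)
  0 < alo -> alo <= ahi -> 0 < blo -> blo <= bhi -> 0 < glo -> glo <= ghi ->
  (forall k, alo <= alpha k <= ahi) ->
  (forall k, blo <= beta k <= bhi) ->
  (forall k, glo <= gamma k <= ghi) ->
  (* (A7) *)
  phi_lb f C r = phi_star f C Q r ->
  (* ABP iteration with mu > 0 and arbitrary starting point x 0 *)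
  0 < mu ->
  (forall k, abp_step f C Q r mu (alpha k) (beta k) (gamma k) (lambda k)
                      (x k) (x k.+1)) ->
  exists xinf : 'rV[R]_n, Omega f C Q r xinf /\ x @ \oo --> xinf.
Proof.
move=> hn hm rpos rsum fdiff gcont C0 Ccl Ccv Q0 Qcl Qcv fbd fcvx Om0 lpos lsum l2
  alo0 aloahi blo0 blobhi glo0 gloghi hA hB hG A7 mu0 step.
have Ccv' := conv_bridge Ccv; have Qcv' := conv_bridge Qcv.
have [pp Hp] := choice step.
have [cc Hc] := choice Hp.
have [ii Hi] := choice Hc.
pose rho k := FF f (x k) - pp k.
pose z k := x k - cc k.
pose v k := rho k *m Defs.jacobian f (x k).
pose w k := r (ii k) *: grad (f (ii k)) (x k).
pose Dl k := phi f C r (x k) - phi_lb f C r.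
pose d k := (if 0 <= Dl k then alpha k else 0) *: w k + beta k *: z k + gamma k *: v k.
pose eta k := Num.max mu (enorm (d k)).
pose s k := lambda k / eta k.
pose th k := (if 0 <= Dl k then alpha k * (phi f C r (x k) - phi_star f C Q r) else 0)
   + beta k * enorm (z k) ^+ 2 + gamma k * enorm (rho k) ^+ 2.
have Pp : forall k, is_proj (Qplus Q) (FF f (x k)) (pp k) := fun k => (Hi k).1.
have Pc : forall k, is_proj C (x k) (cc k) := fun k => (Hi k).2.1.
have Pa : forall k, is_argmax f C r (x k) (ii k) := fun k => (Hi k).2.2.1.
have Hx : forall k, x k.+1 = x k - s k *: d k := fun k => (Hi k).2.2.2.
have eta_pos : forall k, 0 < eta k by move=> k; rewrite /eta lt_max mu0.
have d_le : forall k, enorm (d k) <= eta k by move=> k; rewrite /eta le_max lexx orbT.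
have s0 : forall k, 0 <= s k by move=> k; rewrite /s divr_ge0 // ltW.
have al0 : forall k, 0 < alpha k by move=> k; have /andP[h _] := hA k; exact: lt_le_trans alo0 h.
have be0 : forall k, 0 < beta k by move=> k; have /andP[h _] := hB k; exact: lt_le_trans blo0 h.
have ga0 : forall k, 0 < gamma k by move=> k; have /andP[h _] := hG k; exact: lt_le_trans glo0 h.
have th0 : forall k, 0 <= th k.
  move=> k; rewrite /th; apply: addr_ge0; last by rewrite mulr_ge0 ?sqr_ge0 // ltW.
  apply: addr_ge0; last by rewrite mulr_ge0 ?sqr_ge0 // ltW.
  case: ifP => // hD; apply: mulr_ge0; [exact: ltW | rewrite -A7; exact: hD].
have dth : forall xs, Omega f C Q r xs -> forall k, th k <= dot (d k) (x k - xs).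
  move=> xs Oxs k; have [[HH0' GG0'] phis] := Oxs.
  have e1 := HH0 HH0'; have e2 := GG0 GG0'.
  rewrite /d !dotDl !dotZl /th.
  have hz := dot_z_ge Ccv' C0 (Pc k) e1.
  have hv := dot_v_ge fdiff fcvx Qcv' Q0 (Pp k) e2.
  have hw := dot_w_ge xs rpos fdiff fcvx (Pa k).
  rewrite phis in hw.
  apply: lerD; first apply: lerD.
  - rewrite dotZl in hw; case: ifP => _ //; have := al0 k; nra.
  - have := be0 k; nra.
  - have := ga0 k; nra.
have fej : forall xs, Omega f C Q r xs -> forall k,
    enorm (x k.+1 - xs) ^+ 2 <= enorm (x k - xs) ^+ 2 + lambda k ^+ 2 - s k * (2 * th k).
  move=> xs Oxs k.
  have -> : x k.+1 - xs = (x k - xs) - s k *: d k by rewrite Hx; apply/rowP => j; rewrite !mxE; ring.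
  rewrite !enorm_sq.
  move: (x k - xs) (dth xs Oxs k) => X h1.
  rewrite dotBl !dotBr !dotZl !dotZr (dotC X (d k)).
  have h2 : s k * (s k * dot (d k) (d k)) <= lambda k ^+ 2.
    rewrite mulrA -expr2 -enorm_sq -exprMn.
    apply: sq_le; first by rewrite mulr_ge0 ?enorm_ge0.
    rewrite /s mulrAC ler_pdivrMr // ler_wpM2l //; exact: ltW.
  have h3 := ler_wpM2l (s0 k) h1.
  lra.
have [xs0 Oxs0] := Om0.
pose e k := lambda k ^+ 2.
have e0 : forall k, 0 <= e k by move=> k; exact: sqr_ge0.
pose c k := s k * (2 * th k).
have c0 : forall k, 0 <= c k.
  by move=> k; apply: mulr_ge0; [exact: s0 | apply: mulr_ge0; [by [] | exact: th0]].
pose a0 k := enorm (x k - xs0) ^+ 2.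
have fej0 : forall k, a0 k.+1 <= a0 k + e k - c k.
  move=> k; exact: (fej xs0 Oxs0 k).
have a0B := bounded_fejer fej0 c0 e0 l2.
pose Eb := 1 + (a0 0%N + limn (series e)) + enorm xs0.
have xE : forall k, enorm (x k) <= Eb.
  move=> k; have h := a0B k.
  have h1 : enorm (x k - xs0) <= 1 + a0 k.
    rewrite /a0; have := enorm_ge0 (x k - xs0); nra.
  have -> : x k = (x k - xs0) + xs0 by rewrite subrK.
  apply: le_trans (enorm_triangle _ _) _; rewrite /Eb; lra.
have xB : forall k, `|x k| <= Eb by move=> k; exact: le_trans (mx_le_enorm _) (xE k).
have fcont : forall i, continuous (f i).
  by move=> i y; apply: differentiable_continuous.
have [Mg [Mg0 HMg]] : exists M, 0 <= M /\ forall i, forall y, `|y| <= Eb -> `|grad (f i) y| <= M.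
  apply: unif_bound; first by move=> i M M' MM' H y hy; exact: le_trans (H y hy) MM'.
  move=> i; exact: bounded_cont.
have [Mf [Mf0 HMf]] : exists M, 0 <= M /\ forall i, forall y, `|y| <= Eb -> `|f i y| <= M.
  apply: unif_bound; first by move=> i M M' MM' H y hy; exact: le_trans (H y hy) MM'.
  move=> i; exact: (bounded_cont (V := R^o)).
have [c00 Cc00] := C0.
have [q00 Qq00] := Qplus0 Q0.
have r1 : forall i, 0 <= r i <= 1.
  move=> i; rewrite ltW //=; rewrite -rsum (bigD1 i) //= lerDl.
  by apply: sumr_ge0 => j _; exact: ltW.
pose Md := ahi * (n%:R * Mg) + bhi * (Eb + enorm c00)
     + ghi * (n%:R * (m%:R * ((m%:R * Mf + enorm q00) * Mg))).
have dB : forall k, enorm (d k) <= Md.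
  move=> k.
  apply: (d_bound (xk:=x k) (pk:=pp k) (ck:=cc k) (i:=ii k)
     (ca:= if 0 <= Dl k then alpha k else 0) (b:=beta k) (g:=gamma k) (ahi:=ahi) (bhi:=bhi)
     (ghi:=ghi) (Mg:=Mg) (Mf:=Mf) (E:=Eb) (c0:=c00) (q0:=q00)).
  - exact: Cc00.
  - exact: Qq00.
  - exact: Pp.
  - exact: Pc.
  - exact: r1.
  - exact: xE.
  - exact: Mg0.
  - move=> i j; exact: le_trans (coord_le_mx _ j) (HMg i _ (xB k)).
  - move=> i; exact: HMf.
  - case: ifP => _; last by rewrite normr0; exact: le_trans (ltW alo0) aloahi.
    by have /andP[h1 h2] := hA k; rewrite ger0_norm // (le_trans (ltW alo0) h1).
  - by have /andP[h1 h2] := hB k; rewrite h2 (le_trans (ltW blo0) h1).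
  - by have /andP[h1 h2] := hG k; rewrite h2 (le_trans (ltW glo0) h1).
pose M := Num.max mu Md.
have M0 : 0 < M by rewrite /M lt_max mu0.
have sM : forall k, lambda k / M <= s k.
  move=> k; rewrite /s ler_pM2l // lef_pV2 ?posrE //.
  by rewrite /eta /M ge_max le_max lexx /= le_max (dB k) orbT.
have fej0' : forall k, a0 k.+1 <= a0 k + e k - s k * (2 * th k) := fej0.
have fr := frequently_small fej0' e0 l2 (fun k => sqr_ge0 _) (fun k => mulr_ge0 (ler0n _ 2) (th0 k)) M0 sM lpos lsum.
have [xb Hxb] := cluster_sub xB fr.
have thp : forall k, [/\ 0 <= (if 0 <= Dl k then alpha k * (phi f C r (x k) - phi_star f C Q r) else 0),
    0 <= beta k * enorm (z k) ^+ 2 & 0 <= gamma k * enorm (rho k) ^+ 2].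
  move=> k; split; try by rewrite mulr_ge0 ?sqr_ge0 // ltW.
  case: ifP => // hD; apply: mulr_ge0; [exact: ltW | rewrite -A7; exact: hD].
have zsmall : forall k eps, 0 < eps -> th k < blo * eps ^+ 2 -> enorm (z k) < eps.
  move=> k eps ep0 h; apply: lt_sq; rewrite ?enorm_ge0 ?ltW //.
  have [t1 t2 t3] := thp k.
  have /andP[hb _] := hB k.
  have : blo * enorm (z k) ^+ 2 <= beta k * enorm (z k) ^+ 2 by apply: ler_wpM2r => //; exact: sqr_ge0.
  rewrite /th in h.
  move=> h'; rewrite -(ltr_pM2l blo0); lra.
have rsmall : forall k eps, 0 < eps -> th k < glo * eps ^+ 2 -> enorm (rho k) < eps.
  move=> k eps ep0 h; apply: lt_sq; rewrite ?enorm_ge0 ?ltW //.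
  have [t1 t2 t3] := thp k.
  have /andP[hg _] := hG k.
  have : glo * enorm (rho k) ^+ 2 <= gamma k * enorm (rho k) ^+ 2 by apply: ler_wpM2r => //; exact: sqr_ge0.
  rewrite /th in h.
  move=> h'; rewrite -(ltr_pM2l glo0); lra.
have psmall : forall k eps, 0 < eps -> th k < alo * eps -> phi f C r (x k) <= phi_star f C Q r + eps.
  move=> k eps ep0 h.
  have [t1 t2 t3] := thp k.
  rewrite /th in h; move: t1 h; rewrite /Dl; case: ifP => hD t1 h; last first.
    move: hD => /negbT; rewrite -ltNge -A7 subr_lt0 => h2; lra.
  have /andP[ha _] := hA k.
  have [hp|hp] := leP (phi f C r (x k) - phi_star f C Q r) 0; first lra.
  have : alo * (phi f C r (x k) - phi_star f C Q r) <= alpha k * (phi f C r (x k) - phi_star f C Q r).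
    by apply: ler_wpM2r => //; exact: ltW.
  move=> h4.
  have h5 : alo * (phi f C r (x k) - phi_star f C Q r) < alo * eps by lra.
  by move: h5; rewrite ltr_pM2l // => h6; lra.
have clu : forall d1 d2, 0 < d1 -> 0 < d2 -> exists k, `|xb - x k| < d1 /\ th k < d2.
  move=> d1 d2 h1 h2.
  have hm0 : 0 < Num.min d1 d2 by rewrite lt_min h1 h2.
  have [k [_ hk1 hk2]] := Hxb _ hm0 0%N.
  exists k; split.
    by apply: lt_le_trans hk2 _; rewrite ge_min lexx.
  have := th0 k; have : Num.min d1 d2 <= d2 by rewrite ge_min lexx orbT.
  move: hk1 => /= hk1; lra.
have fc : forall eps, 0 < eps -> exists2 del, 0 < del &
    forall y, `|xb - y| < del -> forall i, `|f i xb - f i y| < eps.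
  move=> eps ep0.
  have H : \forall y \near xb, forall i, `|f i xb - f i y| < eps.
    have FF0 : Filter (nbhs xb) by exact: _.
    apply: (@filter_forall _ 'I_m (fun i y => `|f i xb - f i y| < eps) (nbhs xb) FF0) => i.
    by have /cvgrPdist_lt /(_ eps ep0) := fcont i xb.
  move/nbhs_normP : H => [del del0 Hd]; exists del => // y hy; exact: Hd.
have hC : Defs.edist C xb = 0.
  apply/eqP; rewrite eq_le (edist_ge0 _ C0) andbT.
  apply: (@le0_eps _ _ (n%:R + 1)); first by rewrite addr_ge0.
  move=> eps ep0.
  have [k [hk1 hk2]] := clu eps (blo * eps ^+ 2) ep0 (mulr_gt0 blo0 (exprn_gt0 2 ep0)).
  apply: le_trans (edist_le _ (Pc k).1) _.
  have -> : xb - cc k = (xb - x k) + z k by rewrite /z; apply/rowP => j; rewrite !mxE; ring.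
  apply: le_trans (enorm_triangle _ _) _.
  have h1 := le_trans (enorm_le_mx (xb - x k)) (ler_wpM2l (ler0n _ n) (ltW hk1)).
  have h2 := zsmall k eps ep0 hk2.
  lra.
have hG0 : Defs.edist (Qplus Q) (FF f xb) = 0.
  apply/eqP; rewrite eq_le (edist_ge0 _ (Qplus0 Q0)) andbT.
  apply: (@le0_eps _ _ (m%:R + 1)); first by rewrite addr_ge0.
  move=> eps ep0.
  have [del del0 Hdel] := fc eps ep0.
  have [k [hk1 hk2]] := clu del (glo * eps ^+ 2) del0 (mulr_gt0 glo0 (exprn_gt0 2 ep0)).
  apply: le_trans (edist_le _ (Pp k).1) _.
  have -> : FF f xb - pp k = (FF f xb - FF f (x k)) + rho k.
    by rewrite /rho; apply/rowP => j; rewrite !mxE; ring.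
  apply: le_trans (enorm_triangle _ _) _.
  have h1 : enorm (FF f xb - FF f (x k)) <= m%:R * eps.
    apply: enorm_le_coord => i; rewrite !mxE; exact: ltW (Hdel _ hk1 i).
  have h2 := rsmall k eps ep0 hk2.
  lra.
have hphi : phi f C r xb <= phi_star f C Q r.
  rewrite -subr_le0; apply: (@le0_eps _ _ 2) => // eps ep0.
  have [del del0 Hdel] := fc eps ep0.
  have [k [hk1 hk2]] := clu del (alo * eps) del0 (mulr_gt0 alo0 ep0).
  have h1 := psmall k eps ep0 hk2.
  suff : phi f C r xb <= phi_star f C Q r + 2 * eps by lra.
  apply: (phi_le (Ordinal hm)) => i.
  have h2 := phi_ge f C r (x k) i.
  have h3 := Hdel _ hk1 i.
  have /andP[ri0 ri1] := r1 i.
  rewrite /term in h2 *.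
  have h4 : r i * (f i xb - f i (x k)) <= eps.
    apply: le_trans (ler_norm _) _; rewrite normrM ger0_norm //.
    have := normr_ge0 (f i xb - f i (x k)); nra.
  have -> : r i * (f i xb - zstar f C i) = r i * (f i (x k) - zstar f C i) + r i * (f i xb - f i (x k)).
    by ring.
  lra.
have Cxb : C xb.
  apply: Ccl => B /nbhs_ballP [eps ep0 HB].
  have [c1 Cc1 hc1] := edist0_approx C0 hC ep0.
  exists c1; split => //; apply: HB; rewrite -ball_normE /=.
  exact: le_lt_trans (mx_le_enorm _) hc1.
have hphi2 : phi_star f C Q r <= phi f C r xb.
  rewrite -A7; apply: ge_inf; last by exists xb.
  exists 0 => _ [y Cy <-].
  apply: le_trans (phi_ge f C r y (Ordinal hm)).
  by apply: term_ge0_C => //; exact: fbd.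
have Oxb : Omega f C Q r xb.
  split; last by apply/eqP; rewrite eq_le hphi hphi2.
  by split; rewrite /HH /GG ?hC ?hG0 expr0n /= mul0r.
exists xb; split => //.
pose a1 k := enorm (x k - xb) ^+ 2.
have fej1 : forall k, a1 k.+1 <= a1 k + e k.
  move=> k; have := fej xb Oxb k; have := c0 k; rewrite /a1 /e /c; lra.
have fr1 : forall eps, 0 < eps -> forall N, exists2 k, (N <= k)%N & a1 k < eps.
  move=> eps ep0 N.
  set mn := Num.min 1 eps.
  have mn0 : 0 < mn by rewrite lt_min ltr01 ep0.
  have n10 : 0 < n%:R + 1 :> R by rewrite ltr_wpDl.
  set del := mn / (n%:R + 1).
  have del0 : 0 < del by rewrite divr_gt0.
  have ndel : n%:R * del < mn.
    rewrite /del mulrA ltr_pdivrMr //; nra.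
  have [k [Nk _ hk]] := Hxb del del0 N.
  exists k => //.
  have h1 : enorm (x k - xb) < mn.
    rewrite enormB; apply: le_lt_trans (enorm_le_mx _) _.
    apply: le_lt_trans ndel; apply: ler_wpM2l => //; exact: ltW.
  have h0 := enorm_ge0 (x k - xb).
  have : mn <= 1 by rewrite ge_min lexx.
  have : mn <= eps by rewrite ge_min lexx orbT.
  rewrite /a1; nra.
have ev := eventually_small fej1 e0 l2 fr1.
apply/cvgrPdist_lt => eps ep0.
have e2 : 0 < (eps / 2) ^+ 2 by rewrite exprn_gt0 // divr_gt0.
have [N HN] := ev _ e2.
apply: filterS (nbhs_infty_ge N) => K NK.
have h := HN K NK.
have h2 : enorm (x K - xb) <= eps / 2.
  apply: le_sq; [exact: enorm_ge0 | by rewrite divr_ge0 // ltW | exact: h].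
have h3 := mx_le_enorm (xb - x K); rewrite enormB in h3.
rewrite /=; lra.
Qed.
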